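(* Fix integers $0\le k\le n$ and on $\mathbb{C}^n=\mathbb{R}^n_x\oplus\sqrt{-1}\mathbb{R}^n_y$ let \[\rho_1(x,y)=\sum_{i=1}^n x_i^2,\qquad \rho_2(x,y)=\sum_{i=1}^k x_i^2+\sum_{i=k+1}^n y_i^2,\] and $L_1=\{\rho_1=0\}=\{x_i=0,\ 1\le i\le n\}$, $L_2=\{\rho_2=0\}=\{x_i=0,\ y_j=0\ |\ 1\le i\le k,\ k+1\le j\le n\}$. Then the functions $\sqrt{\rho_1\rho_2}$ and $\rho_1\rho_2$ are weakly plurisubharmonic (on any open subset of $\mathbb{C}^n$). Furthermore, there is a variety $V\subset\mathbb{C}^n$ with $V\cap(L_1\cup L_2)=L_1\cap L_2$ such that $\rho_1\rho_2$ is strictly plurisubharmonic outside $V$.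
   Context: A function $f$ on an open subset of $\mathbb{C}^n$ is weakly (resp. strictly) plurisubharmonic if its Levi form $dd^cf(\cdot,\sqrt{-1}\cdot)$ is positive semidefinite (resp. positive definite). *)

(* Defs.v *)
From HB Require Import structures.
From mathcomp Require Import all_boot all_order all_algebra.
From mathcomp Require Import all_classical all_reals all_analysis.
Set Implicit Arguments. Unset Strict Implicit. Unset Printing Implicit Defensive.
Import Order.TTheory GRing.Theory Num.Theory.
Local Open Scope ring_scope.
Local Open Scope classical_set_scope.

(* points of C^n = R^n_x (+) sqrt(-1) R^n_y *)
Definition Cn (R : realType) (n : nat) : Type := (('I_n -> R) * ('I_n -> R))%type.

Definition cshift (R : realType) (n : nat) (p : Cn R n) (t : R) (w : Cn R n) : Cn R n :=
  (fun i => p.1 i + t * w.1 i, fun i => p.2 i + t * w.2 i).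

(* multiplication by sqrt(-1): (a + i b) |-> (-b + i a) *)
Definition Jc (R : realType) (n : nat) (w : Cn R n) : Cn R n :=
  (fun i => - w.2 i, fun i => w.1 i).

Definition hess2 (R : realType) (n : nat) (f : Cn R n -> R) (p w : Cn R n) : R :=
  derive1n 2 (fun t : R => f (cshift p t w)) 0.

(* Levi form  dd^c f (w, sqrt(-1) w), normalised as
   sum_{j,k} f_{z_j zbar_k} w_j conj(w_k) = (Hess f (w,w) + Hess f (Jw,Jw)) / 4 *)
Definition levi (R : realType) (n : nat) (f : Cn R n -> R) (p w : Cn R n) : R :=
  (hess2 f p w + hess2 f p (Jc w)) / 4%:R.

Definition cn_nonzero (R : realType) (n : nat) (w : Cn R n) : Prop :=
  exists i, w.1 i != 0 \/ w.2 i != 0.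

Definition weakly_psh_at (R : realType) (n : nat) (f : Cn R n -> R) (p : Cn R n) : Prop :=
  forall w : Cn R n, 0 <= levi f p w.
Definition strictly_psh_at (R : realType) (n : nat) (f : Cn R n -> R) (p : Cn R n) : Prop :=
  forall w : Cn R n, cn_nonzero w -> 0 < levi f p w.

Inductive polyfun (R : realType) (n : nat) : (Cn R n -> R) -> Prop :=
| polyfun_cst (c : R) : polyfun (fun _ => c)
| polyfun_x (i : 'I_n) : polyfun (fun p => p.1 i)
| polyfun_y (i : 'I_n) : polyfun (fun p => p.2 i)
| polyfun_add f g : polyfun f -> polyfun g -> polyfun (fun p => f p + g p)
| polyfun_mul f g : polyfun f -> polyfun g -> polyfun (fun p => f p * g p).

Definition is_variety (R : realType) (n : nat) (V : set (Cn R n)) : Prop :=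
  exists P : Cn R n -> R, polyfun P /\ V = [set p : Cn R n | P p = 0].

Definition rho1 (R : realType) (n : nat) (p : Cn R n) : R :=
  \sum_(i < n) p.1 i ^+ 2.
Definition rho2 (R : realType) (n k : nat) (p : Cn R n) : R :=
  \sum_(i < n | (i < k)%N) p.1 i ^+ 2 + \sum_(i < n | (k <= i)%N) p.2 i ^+ 2.

Definition L1 (R : realType) (n : nat) : set (Cn R n) := [set p : Cn R n | rho1 p = 0].
Definition L2 (R : realType) (n k : nat) : set (Cn R n) := [set p : Cn R n | rho2 k p = 0].

(* Main.v *)
Require Import Defs.
From HB Require Import structures.
From mathcomp Require Import all_boot all_order all_algebra.
From mathcomp Require Import all_classical all_reals all_analysis.
From mathcomp Require Import ring lra.
Import Order.TTheory GRing.Theory Num.Theory.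
Local Open Scope ring_scope.
Local Open Scope classical_set_scope.


Section Deriv.
Variable R : realType.

Lemma hess_poly (Q : {poly R}) : derive1n 2 (horner Q) 0 = (Q^`()^`()).[0].
Proof.
rewrite derive1nS derive1n1.
rewrite -derivE -derivE. done.
Qed.


Lemma quart_poly (a b c d e f : R) :
  let Q := (a%:P + b%:P * 'X + c%:P * 'X^2) * (d%:P + e%:P * 'X + f%:P * 'X^2) in
  (forall t, Q.[t] = (a + b * t + c * t ^+ 2) * (d + e * t + f * t ^+ 2)) /\
  Q.[0] = a * d /\ (Q^`()).[0] = a * e + b * d /\
  (Q^`()^`()).[0] = 2 * (a * f + b * e + c * d).
Proof.
move=> Q; split; first by move=> t; rewrite /Q !hornerE.
split; first by rewrite /Q !hornerE /=; ring.
rewrite /Q !(derivM, derivD, derivC, derivX, derivXn) !hornerE /=.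
by split; ring.
Qed.

Lemma hess_quart (a b c d e f : R) :
  derive1n 2 (fun t : R => (a + b * t + c * t ^+ 2) * (d + e * t + f * t ^+ 2)) 0
  = 2 * (a * f + b * e + c * d).
Proof.
have [H0 [_ [_ H2]]] := quart_poly a b c d e f.
pose Q := ((a%:P + b%:P * 'X + c%:P * 'X^2) * (d%:P + e%:P * 'X + f%:P * 'X^2)).
have -> : (fun t : R => (a + b * t + c * t ^+ 2) * (d + e * t + f * t ^+ 2)) = horner Q.
  by apply/funext => t; rewrite /Q H0.
by rewrite hess_poly /Q H2.
Qed.

Lemma hess_sqrt_poly (Q : {poly R}) : 0 < Q.[0] ->
  derive1n 2 (fun t => Num.sqrt Q.[t]) 0 =
  (Q^`()^`()).[0] / (2 * Num.sqrt Q.[0]) - (Q^`()).[0] ^+ 2 / (4 * Q.[0] * Num.sqrt Q.[0]).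
Proof.
move=> Q0.
rewrite derive1nS derive1n1.
pose h := fun t => (Q^`()).[t] * (2 * Num.sqrt Q.[t])^-1.
have Dc : forall x, 0 < Q.[x] ->
   is_derive x 1 (Num.sqrt \o horner Q) ((2 * Num.sqrt Q.[x])^-1 * (Q^`()).[x]).
  move=> x Qx; exact: (is_derive1_comp (is_derive1_sqrt Qx) (is_derive_poly Q x)).
have nearpos : \forall t \near 0, 0 < Q.[t].
  exact: (cvgr_gt _ (@continuous_horner R Q 0) 0 Q0).
have E : \forall t \near 0, (fun t => Num.sqrt Q.[t])^`() t = h t.
  near=> t.
  have Qt : 0 < Q.[t] by near: t.
  rewrite derive1E.
  have -> : (fun t => Num.sqrt Q.[t]) = (Num.sqrt \o horner Q) by [].
  by case: (Dc t Qt) => _ ->; rewrite /h mulrC.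
rewrite derive1E (near_eq_derive _ E).
have sq0 : 0 < Num.sqrt Q.[0] by rewrite sqrtr_gt0.
have D2 : is_derive (0:R) 1 (2 \*: (Num.sqrt \o horner Q)) (2 *: ((2 * Num.sqrt Q.[0])^-1 * (Q^`()).[0])).
  exact: is_deriveZ (Dc 0 Q0).
have nz : (2 \*: (Num.sqrt \o horner Q)) 0 != 0.
  rewrite /= mulf_neq0 //; last by rewrite gt_eqF.
have D3 := is_deriveV nz D2.
have D4 := is_deriveM (is_derive_poly Q^`() 0) D3.
have -> : h = (horner Q^`() * (fun y => ((2 \*: (Num.sqrt \o horner Q)) y)^-1)).
  by apply/funext => t; rewrite /h /=.
case: D4 => _ ->; rewrite /=.
have sc : forall a b : R, a *: b = a * b by [].
rewrite !sc.
have hq := sqr_sqrtr (ltW Q0).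
set s := Num.sqrt _ in hq sq0 *.
set q := Q.[0] in hq *.
rewrite -hq.
have s0 : s != 0 by rewrite gt_eqF.
rewrite -[(Q^`()).[0]]/((Q^`()).[0] : R).
set a := (Q^`()).[0]. set b := _.[0].
rewrite /GRing.exp /=.
by field; rewrite s0.
Unshelve. all: by end_near.
Qed.

Lemma hess_sqrt_quart (a b c d e f : R) : 0 < a * d ->
  derive1n 2 (fun t : R => Num.sqrt ((a + b * t + c * t ^+ 2) * (d + e * t + f * t ^+ 2))) 0
  = 2 * (a * f + b * e + c * d) / (2 * Num.sqrt (a * d))
    - (a * e + b * d) ^+ 2 / (4 * (a * d) * Num.sqrt (a * d)).
Proof.
move=> ad0.
have [H0 [Q0 [Q1 Q2]]] := quart_poly a b c d e f.
pose Q := ((a%:P + b%:P * 'X + c%:P * 'X^2) * (d%:P + e%:P * 'X + f%:P * 'X^2)).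
have -> : (fun t : R => Num.sqrt ((a + b * t + c * t ^+ 2) * (d + e * t + f * t ^+ 2)))
   = (fun t => Num.sqrt Q.[t]).
  by apply/funext => t; rewrite /Q H0.
by rewrite hess_sqrt_poly /Q Q0 ?Q1 ?Q2.
Qed.

End Deriv.

Section Sums.
Context {R : realType} {n : nat}.
Implicit Types (F G H : 'I_n -> R).

Lemma sum_lin2 (c1 c2 : R) F G :
  \sum_(i < n) (c1 * F i + c2 * G i) = c1 * \sum_(i < n) F i + c2 * \sum_(i < n) G i.
Proof. by rewrite big_split /= -!mulr_sumr. Qed.

Lemma sum_lin3 (c1 c2 c3 : R) F G H :
  \sum_(i < n) (c1 * F i + c2 * G i + c3 * H i) =
  c1 * \sum_(i < n) F i + c2 * \sum_(i < n) G i + c3 * \sum_(i < n) H i.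
Proof. by rewrite !big_split /= -!mulr_sumr. Qed.

Lemma sum_lin4 (c1 c2 c3 c4 : R) F G H (K : 'I_n -> R) :
  \sum_(i < n) (c1 * F i + c2 * G i + c3 * H i + c4 * K i) =
  c1 * \sum_(i < n) F i + c2 * \sum_(i < n) G i + c3 * \sum_(i < n) H i
  + c4 * \sum_(i < n) K i.
Proof. by rewrite !big_split /= -!mulr_sumr. Qed.

Lemma sumsq_eq0 F G : \sum_(i < n) (F i ^+ 2 + G i ^+ 2) = 0 ->
  forall i, F i = 0 /\ G i = 0.
Proof.
move=> /eqP; rewrite psumr_eq0 => [/allP H i|i _]; last by rewrite addr_ge0 // sqr_ge0.
have /H /= /eqP : i \in index_enum 'I_n by rewrite mem_index_enum.
move=> h; have h1 : 0 <= F i ^+ 2 by rewrite sqr_ge0.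
have h2 : 0 <= G i ^+ 2 by rewrite sqr_ge0.
split; apply/eqP; rewrite -sqrf_eq0; apply/eqP; lra.
Qed.

Lemma sumsq_ge0 F G : 0 <= \sum_(i < n) (F i ^+ 2 + G i ^+ 2).
Proof. by apply: sumr_ge0 => i _; rewrite addr_ge0 // sqr_ge0. Qed.

(* complex Cauchy-Schwarz with defect *)
Lemma cs_identity (p q u v : 'I_n -> R) :
  let T1 := \sum_(i < n) (p i * u i - q i * v i) in
  let T2 := \sum_(i < n) (p i * v i + q i * u i) in
  let C := \sum_(i < n) (p i ^+ 2 + q i ^+ 2) in
  let W := \sum_(i < n) (u i ^+ 2 + v i ^+ 2) in
  W * (W * C - (T1 ^+ 2 + T2 ^+ 2)) =
  \sum_(i < n) ((W * p i - T1 * u i - T2 * v i) ^+ 2 + (W * q i + T1 * v i - T2 * u i) ^+ 2).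
Proof.
move=> T1 T2 C W.
rewrite (eq_bigr (fun i => W ^+ 2 * (p i ^+ 2 + q i ^+ 2) + (T1 ^+ 2 + T2 ^+ 2) * (u i ^+ 2 + v i ^+ 2)
   + (- 2 * W * T1) * (p i * u i - q i * v i) + (- 2 * W * T2) * (p i * v i + q i * u i))); last first.
  by move=> i _; ring.
rewrite sum_lin4 -/T1 -/T2 -/C -/W; ring.
Qed.


Lemma sumsq1_eq0 F : \sum_(i < n) F i ^+ 2 = 0 -> forall i, F i = 0.
Proof.
move=> h i; have := @sumsq_eq0 F (fun _ => 0).
rewrite (eq_bigr (fun i => F i ^+ 2)); last by move=> j _; rewrite expr0n addr0.
by move=> /(_ h i) [].
Qed.

Lemma sumsq1_ge0 F : 0 <= \sum_(i < n) F i ^+ 2.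
Proof. by apply: sumr_ge0 => i _; rewrite sqr_ge0. Qed.

End Sums.

Section Core.
Variables (R : realType) (n : nat).
Variables (x S1 S2 u v : 'I_n -> R).
Hypothesis hS : forall i, x i * S1 i = S1 i ^+ 2.

Definition sa := \sum_(i < n) x i ^+ 2.
Definition sd := \sum_(i < n) (S1 i ^+ 2 + S2 i ^+ 2).
Definition sW := \sum_(i < n) (u i ^+ 2 + v i ^+ 2).
Definition sb := 2 * \sum_(i < n) (x i * u i).
Definition sb' := - 2 * \sum_(i < n) (x i * v i).
Definition se := 2 * \sum_(i < n) (S1 i * u i - S2 i * v i).
Definition se' := - 2 * \sum_(i < n) (S1 i * v i + S2 i * u i).
Definition sA := \sum_(i < n) S1 i ^+ 2.
Definition sxS2 := \sum_(i < n) (x i * S2 i).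
Definition sP := (sa + sd) * sW + sb * se + sb' * se'.

Lemma W0 : sW = 0 -> sb = 0 /\ sb' = 0 /\ se = 0 /\ se' = 0.
Proof.
move=> /sumsq_eq0 h.
rewrite /sb /sb' /se /se' !big1 ?mulr0 //; move=> i _; case: (h i) => h1 h2; rewrite ?h1 ?h2; ring.
Qed.

Lemma a0 : sa = 0 -> sb = 0 /\ sb' = 0 /\ sxS2 = 0 /\ sA = 0.
Proof.
move=> /sumsq1_eq0 h.
have hA : forall i, S1 i ^+ 2 = 0 by move=> i; rewrite -hS h mul0r.
rewrite /sb /sb' /sxS2 /sA !big1 ?mulr0 //; move=> i _; rewrite ?h ?hA; ring.
Qed.

Lemma d0 : sd = 0 -> se = 0 /\ se' = 0 /\ sxS2 = 0 /\ sA = 0.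
Proof.
move=> /sumsq_eq0 h.
rewrite /se /se' /sxS2 /sA !big1 ?mulr0 //; move=> i _; case: (h i) => h1 h2; rewrite ?h1 ?h2; ring.
Qed.

Let p := fun i => sd * x i - sa * S1 i.
Let q := fun i => - sa * S2 i.
Let T1 := \sum_(i < n) (p i * u i - q i * v i).
Let T2 := \sum_(i < n) (p i * v i + q i * u i).
Let C := \sum_(i < n) (p i ^+ 2 + q i ^+ 2).

Lemma T1e : 2 * T1 = sd * sb - sa * se.
Proof.
have -> : T1 = sd * \sum_(i < n) (x i * u i) + (- sa) * \sum_(i < n) (S1 i * u i - S2 i * v i).
  by rewrite -sum_lin2; apply: eq_bigr => i _; rewrite /p /q; ring.
rewrite /sb /se; ring.
Qed.

Lemma T2e : - 2 * T2 = sd * sb' - sa * se'.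
Proof.
have -> : T2 = sd * \sum_(i < n) (x i * v i) + (- sa) * \sum_(i < n) (S1 i * v i + S2 i * u i).
  by rewrite -sum_lin2; apply: eq_bigr => i _; rewrite /p /q; ring.
rewrite /sb' /se'; ring.
Qed.

Lemma Ce : C = sd ^+ 2 * sa - 2 * sa * sd * sA + sa ^+ 2 * sd.
Proof.
have -> : C = sd ^+ 2 * \sum_(i < n) x i ^+ 2 + (- 2 * sa * sd) * \sum_(i < n) (x i * S1 i)
   + sa ^+ 2 * \sum_(i < n) (S1 i ^+ 2 + S2 i ^+ 2).
  by rewrite -sum_lin3; apply: eq_bigr => i _; rewrite /p /q; ring.
rewrite -/sa -/sd (eq_bigr (fun i => S1 i ^+ 2)) -/sA; last by move=> i _; rewrite hS.
ring.
Qed.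

Lemma sa_ge0 : 0 <= sa. Proof. exact: sumsq1_ge0. Qed.
Lemma sd_ge0 : 0 <= sd. Proof. exact: sumsq_ge0. Qed.
Lemma sW_ge0 : 0 <= sW. Proof. exact: sumsq_ge0. Qed.
Lemma sA_ge0 : 0 <= sA. Proof. exact: sumsq1_ge0. Qed.

Lemma csW : sW * (sW * C - (T1 ^+ 2 + T2 ^+ 2)) =
  \sum_(i < n) ((sW * p i - T1 * u i - T2 * v i) ^+ 2 + (sW * q i + T1 * v i - T2 * u i) ^+ 2).
Proof. exact: cs_identity. Qed.

Lemma csW_ge0 : 0 < sW -> T1 ^+ 2 + T2 ^+ 2 <= sW * C.
Proof.
move=> W0'; have := sumsq_ge0 (fun i => sW * p i - T1 * u i - T2 * v i)
   (fun i => sW * q i + T1 * v i - T2 * u i).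
rewrite -csW pmulr_rge0 // subr_ge0 //.
Qed.

Lemma core_ineq : (sd * sb - sa * se) ^+ 2 + (sd * sb' - sa * se') ^+ 2
   <= 4 * sa * sd * (sa + sd) * sW.
Proof.
have [Wz|Wp] := eqVneq sW 0.
  have [-> [-> [-> ->]]] := W0 Wz; rewrite Wz; lra.
have Wp' : 0 < sW by rewrite lt_def Wp sW_ge0.
rewrite -T1e -T2e.
have h := csW_ge0 Wp'. rewrite Ce in h.
have : 0 <= sa * sd * sA * sW by rewrite !mulr_ge0 // ?sa_ge0 ?sd_ge0 ?sA_ge0 ?sW_ge0.
nra.
Qed.


Lemma P_id : 4 * sa * sd * sP =
  (sd * sb + sa * se) ^+ 2 + (sd * sb' + sa * se') ^+ 2 +
  (4 * sa * sd * (sa + sd) * sW - (sd * sb - sa * se) ^+ 2 - (sd * sb' - sa * se') ^+ 2).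
Proof. rewrite /sP; ring. Qed.

Lemma core_P : 0 <= sP.
Proof.
have [Wz|Wp] := eqVneq sW 0.
  rewrite /sP; have [-> [-> [-> ->]]] := W0 Wz; rewrite Wz; lra.
have Wp' : 0 < sW by rewrite lt_def Wp sW_ge0.
have [az|ap] := eqVneq sa 0.
  have [hb [hb' _]] := a0 az; rewrite /sP hb hb' az.
  have := sd_ge0; nra.
have [dz|dp] := eqVneq sd 0.
  have [he [he' _]] := d0 dz; rewrite /sP he he' dz.
  have := sa_ge0; nra.
have ap' : 0 < sa by rewrite lt_def ap sa_ge0.
have dp' : 0 < sd by rewrite lt_def dp sd_ge0.
have h := P_id. have hi := core_ineq.
have : 0 <= 4 * sa * sd * sP.
  rewrite h; apply: addr_ge0; first by apply: addr_ge0; apply: sqr_ge0.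
  lra.
rewrite pmulr_rge0 //; rewrite !mulr_gt0 //.
Qed.

Lemma core_strict : 0 < sW -> sP = 0 -> sA = 0 /\ sa = sd /\ sxS2 = 0.
Proof.
move=> Wp' P0.
have [az|ap] := eqVneq sa 0.
  have [hb [hb' [hx hA]]] := a0 az.
  move: P0; rewrite /sP hb hb' az !mul0r !addr0 add0r => /eqP.
  rewrite mulf_eq0 (gt_eqF Wp') orbF => /eqP dz.
  by rewrite dz.
have [dz|dp] := eqVneq sd 0.
  have [he [he' [hx hA]]] := d0 dz.
  move: P0; rewrite /sP he he' dz !mulr0 !addr0 => /eqP.
  rewrite mulf_eq0 (gt_eqF Wp') orbF => /eqP az.
  by rewrite az.
have ap' : 0 < sa by rewrite lt_def ap sa_ge0.
have dp' : 0 < sd by rewrite lt_def dp sd_ge0.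
have h := P_id. rewrite P0 mulr0 in h.
have hT := csW_ge0 Wp'.
have hC := Ce.
have hA0 := sA_ge0.
have hAW : 0 <= sa * sd * sA * sW by rewrite !mulr_ge0 // ?sA_ge0 ?ltW.
have Rid : (sd * sb + sa * se) ^+ 2 + (sd * sb' + sa * se') ^+ 2 +
  (4 * sa * sd * (sa + sd) * sW - (sd * sb - sa * se) ^+ 2 - (sd * sb' - sa * se') ^+ 2)
   = (sd * sb + sa * se) ^+ 2 + (sd * sb' + sa * se') ^+ 2 +
     (8 * (sa * sd * sA * sW) + 4 * (sW * C - (T1 ^+ 2 + T2 ^+ 2))).
  by rewrite -T1e -T2e hC; ring.
have hX := sqr_ge0 (sd * sb + sa * se).
have hY := sqr_ge0 (sd * sb' + sa * se').
have hT' : 0 <= sW * C - (T1 ^+ 2 + T2 ^+ 2) by lra.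
rewrite Rid in h.
have E1 : sd * sb + sa * se = 0.
  by apply/eqP; rewrite -sqrf_eq0; apply/eqP; lra.
have E2 : sd * sb' + sa * se' = 0.
  by apply/eqP; rewrite -sqrf_eq0; apply/eqP; lra.
have E3 : sa * sd * sA * sW = 0 by lra.
have E4 : sW * C - (T1 ^+ 2 + T2 ^+ 2) = 0 by lra.
have sAz : sA = 0.
  move: E3 => /eqP; rewrite !mulf_eq0 (gt_eqF Wp') (gt_eqF ap') (gt_eqF dp') /=.
  by rewrite orbF => /eqP.
have S10 := @sumsq1_eq0 _ _ S1 sAz.
have := csW; rewrite E4 mulr0 => /esym /sumsq_eq0 Hpt.
have Hp : forall i, sW * p i = T1 * u i + T2 * v i.
  by move=> i; have [h1 _] := Hpt i; apply/eqP; rewrite -subr_eq0 opprD addrA h1.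
have Hq : forall i, sW * q i = T2 * u i - T1 * v i.
  move=> i; have [_ h2] := Hpt i; apply/eqP; rewrite -subr_eq0.
  by rewrite -h2; apply/eqP; ring.
set U1 := \sum_(i < n) (p i * u i + q i * v i).
set U2 := \sum_(i < n) (p i * v i - q i * u i).
have U1e : 2 * U1 = sd * sb + sa * se.
  have -> : U1 = sd * \sum_(i < n) (x i * u i) + sa * \sum_(i < n) (S1 i * u i - S2 i * v i).
    by rewrite -sum_lin2; apply: eq_bigr => i _; rewrite /p /q S10; ring.
  rewrite /sb /se; ring.
have U2e : - 2 * U2 = sd * sb' + sa * se'.
  have -> : U2 = sd * \sum_(i < n) (x i * v i) + sa * \sum_(i < n) (S1 i * v i + S2 i * u i).
    by rewrite -sum_lin2; apply: eq_bigr => i _; rewrite /p /q S10; ring.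
  rewrite /sb' /se'; ring.
have U10 : U1 = 0 by lra.
have U20 : U2 = 0 by lra.
have D1 : sW * \sum_(i < n) (p i ^+ 2 - q i ^+ 2) = T1 * U1 + T2 * U2.
  rewrite mulr_sumr -sum_lin2; apply: eq_bigr => i _.
  have -> : sW * (p i ^+ 2 - q i ^+ 2) = (sW * p i) * p i - (sW * q i) * q i by ring.
  rewrite Hp Hq; ring.
have D2 : 2 * sW * \sum_(i < n) (p i * q i) = T2 * U1 + (- T1) * U2.
  rewrite mulr_sumr -sum_lin2; apply: eq_bigr => i _.
  have -> : 2 * sW * (p i * q i) = (sW * p i) * q i + p i * (sW * q i) by ring.
  rewrite Hp Hq; ring.
rewrite U10 U20 !mulr0 addr0 in D1 D2.
have F1 : \sum_(i < n) (p i ^+ 2 - q i ^+ 2) = 0.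
  by move: D1 => /eqP; rewrite mulf_eq0 (gt_eqF Wp') /= => /eqP.
have F2 : \sum_(i < n) (p i * q i) = 0.
  move: D2 => /eqP; rewrite !mulf_eq0 (gt_eqF Wp') /= orbF => /orP [|/eqP //].
  by rewrite pnatr_eq0.
have sdS2 : sd = \sum_(i < n) S2 i ^+ 2.
  by rewrite /sd; apply: eq_bigr => i _; rewrite S10; ring.
have G1 : \sum_(i < n) (p i ^+ 2 - q i ^+ 2) = sd ^+ 2 * sa + (- sa ^+ 2) * sd.
  rewrite {2}sdS2.
  have -> : sa = \sum_(i < n) x i ^+ 2 by [].
  rewrite -sum_lin2; apply: eq_bigr => i _; rewrite /p /q S10 -/sa; ring.
have G2 : \sum_(i < n) (p i * q i) = (- sa * sd) * sxS2.
  rewrite /sxS2 mulr_sumr; apply: eq_bigr => i _; rewrite /p /q S10; ring.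
rewrite G1 in F1. rewrite G2 in F2.
split => //; split.
  have : sa * sd * (sd - sa) = 0 by rewrite -F1; ring.
  move=> /eqP; rewrite !mulf_eq0 (gt_eqF ap') (gt_eqF dp') /= subr_eq0 => /eqP ->.
  by [].
move: F2 => /eqP; rewrite !mulf_eq0 oppr_eq0 (gt_eqF ap') (gt_eqF dp') /=.
by move=> /eqP.
Qed.

End Core.
Arguments a0 {R n}.
Arguments d0 {R n}.
Arguments W0 {R n}.
Arguments sa_ge0 {R n}.
Arguments sd_ge0 {R n}.
Arguments sW_ge0 {R n}.
Arguments sA_ge0 {R n}.
Arguments sa {R n}.
Arguments sd {R n}.
Arguments sW {R n}.
Arguments sb {R n}.
Arguments sb' {R n}.
Arguments se {R n}.
Arguments se' {R n}.
Arguments sA {R n}.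
Arguments sxS2 {R n}.
Arguments sP {R n}.
Arguments core_P {R n}.
Arguments core_strict {R n}.
Arguments core_ineq {R n}.

Section Geo.
Variables (R : realType) (n k : nat).
Implicit Types (p w : Cn R n).

Definition S1p p (i : 'I_n) : R := if (i < k)%N then p.1 i else 0.
Definition S2p p (i : 'I_n) : R := if (i < k)%N then 0 else - p.2 i.

Lemma hSp p i : p.1 i * S1p p i = S1p p i ^+ 2.
Proof. by rewrite /S1p; case: ifP => _; ring. Qed.

Lemma split_k (F G : 'I_n -> R) :
  \sum_(i < n | (i < k)%N) F i + \sum_(i < n | (k <= i)%N) G i =
  \sum_(i < n) (if (i < k)%N then F i else G i).
Proof.
rewrite (big_mkcond (fun i : 'I_n => (i < k)%N) F) (big_mkcond (fun i : 'I_n => (k <= i)%N) G).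
rewrite -big_split /=; apply: eq_bigr => i _.
by case: ltnP => _ /=; rewrite ?addr0 ?add0r.
Qed.

Lemma rho2E (q : Cn R n) : rho2 k q = \sum_(i < n) (if (i < k)%N then q.1 i ^+ 2 else q.2 i ^+ 2).
Proof. by rewrite /rho2 split_k. Qed.

Lemma rho2_sd p : rho2 k p = sd (S1p p) (S2p p).
Proof.
rewrite rho2E /sd; apply: eq_bigr => i _; rewrite /S1p /S2p.
by case: ifP => _; ring.
Qed.

Lemma rho1_sa p : rho1 p = sa p.1.
Proof. by []. Qed.

Lemma rho1_shift p t w :
  rho1 (cshift p t w) = sa p.1 + sb p.1 w.1 * t + rho1 w * t ^+ 2.
Proof.
rewrite /rho1 /sa /sb /cshift /=.
transitivity (\sum_(i < n) (1 * p.1 i ^+ 2 + (2 * t) * (p.1 i * w.1 i) + t ^+ 2 * w.1 i ^+ 2)).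
  by apply: eq_bigr => i _; ring.
by rewrite sum_lin3; ring.
Qed.

Lemma rho2_shift p t w :
  rho2 k (cshift p t w) = sd (S1p p) (S2p p) + se (S1p p) (S2p p) w.1 w.2 * t
     + rho2 k w * t ^+ 2.
Proof.
rewrite !rho2E /sd /se /cshift /=.
transitivity (\sum_(i < n) (1 * (S1p p i ^+ 2 + S2p p i ^+ 2)
   + (2 * t) * (S1p p i * w.1 i - S2p p i * w.2 i)
   + t ^+ 2 * (if (i < k)%N then w.1 i ^+ 2 else w.2 i ^+ 2))).
  by apply: eq_bigr => i _; rewrite /S1p /S2p; case: ifP => _; ring.
by rewrite sum_lin3; ring.
Qed.

Lemma sbJ p w : sb p.1 (Jc w).1 = sb' p.1 w.2.
Proof.
rewrite /sb /sb' /Jc /= (eq_bigr (fun i => - (p.1 i * w.2 i))); last by move=> i _; ring.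
by rewrite sumrN; ring.
Qed.

Lemma seJ p w : se (S1p p) (S2p p) (Jc w).1 (Jc w).2 = se' (S1p p) (S2p p) w.1 w.2.
Proof.
rewrite /se /se' /Jc /=.
rewrite (eq_bigr (fun i => - (S1p p i * w.2 i + S2p p i * w.1 i))); last by move=> i _; ring.
by rewrite sumrN; ring.
Qed.

Lemma rho1W w : rho1 w + rho1 (Jc w) = sW w.1 w.2.
Proof. by rewrite /rho1 /sW -big_split /=; apply: eq_bigr => i _; ring. Qed.

Lemma rho2W w : rho2 k w + rho2 k (Jc w) = sW w.1 w.2.
Proof.
rewrite !rho2E /sW -big_split /=; apply: eq_bigr => i _.
by case: ifP => _; ring.
Qed.

Lemma hess_prod p w :
  hess2 (fun q => rho1 q * rho2 k q) p w =
  2 * (sa p.1 * rho2 k w + sb p.1 w.1 * se (S1p p) (S2p p) w.1 w.2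
       + rho1 w * sd (S1p p) (S2p p)).
Proof.
rewrite -hess_quart /hess2; congr (derive1n 2 _ 0); apply/funext => t /=.
by rewrite rho1_shift rho2_shift.
Qed.

Lemma hess_sqrt p w : 0 < rho1 p * rho2 k p ->
  hess2 (fun q => Num.sqrt (rho1 q * rho2 k q)) p w =
  2 * (sa p.1 * rho2 k w + sb p.1 w.1 * se (S1p p) (S2p p) w.1 w.2
       + rho1 w * sd (S1p p) (S2p p))
    / (2 * Num.sqrt (sa p.1 * sd (S1p p) (S2p p)))
  - (sa p.1 * se (S1p p) (S2p p) w.1 w.2 + sb p.1 w.1 * sd (S1p p) (S2p p)) ^+ 2
    / (4 * (sa p.1 * sd (S1p p) (S2p p)) * Num.sqrt (sa p.1 * sd (S1p p) (S2p p))).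
Proof.
move=> h0; rewrite -hess_sqrt_quart; last by rewrite -rho1_sa -rho2_sd.
rewrite /hess2; congr (derive1n 2 _ 0); apply/funext => t /=.
by rewrite rho1_shift rho2_shift.
Qed.

Lemma levi_prod p w : levi (fun q => rho1 q * rho2 k q) p w =
  sP p.1 (S1p p) (S2p p) w.1 w.2 / 2.
Proof.
rewrite /levi !hess_prod sbJ seJ /sP.
have h1 : rho1 (Jc w) = sW w.1 w.2 - rho1 w by rewrite -rho1W; ring.
have h2 : rho2 k (Jc w) = sW w.1 w.2 - rho2 k w by rewrite -rho2W; ring.
rewrite h1 h2.
by field.
Qed.


Lemma sqrt_levi_alg (a d b e b' e' c f W s : R) : 0 < a * d -> 0 < s ->
  (d * b - a * e) ^+ 2 + (d * b' - a * e') ^+ 2 <= 4 * a * d * (a + d) * W ->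
  0 <= (2 * (a * f + b * e + c * d) / (2 * s) - (a * e + b * d) ^+ 2 / (4 * (a * d) * s)
       + (2 * (a * (W - f) + b' * e' + (W - c) * d) / (2 * s)
          - (a * e' + b' * d) ^+ 2 / (4 * (a * d) * s))) / 4%:R.
Proof.
move=> ad0 s0 H.
have sn : s != 0 by rewrite gt_eqF.
have adn : a * d != 0 by rewrite gt_eqF.
have -> : (2 * (a * f + b * e + c * d) / (2 * s) - (a * e + b * d) ^+ 2 / (4 * (a * d) * s)
       + (2 * (a * (W - f) + b' * e' + (W - c) * d) / (2 * s)
          - (a * e' + b' * d) ^+ 2 / (4 * (a * d) * s))) / 4%:R
  = (4 * a * d * (a + d) * W - ((d * b - a * e) ^+ 2 + (d * b' - a * e') ^+ 2))
     / (16 * (a * d) * s).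
  have dn : d != 0 by apply: contraNneq adn => ->; rewrite mulr0.
  have an : a != 0 by apply: contraNneq adn => ->; rewrite mul0r.
  by field; rewrite sn dn an.
apply: divr_ge0; first by rewrite subr_ge0.
by apply: mulr_ge0; [apply: mulr_ge0 => //; exact: ltW | exact: ltW].
Qed.

Lemma levi_sqrt_ge0 p w : 0 < rho1 p * rho2 k p ->
  0 <= levi (fun q => Num.sqrt (rho1 q * rho2 k q)) p w.
Proof.
move=> h0; rewrite /levi !hess_sqrt // sbJ seJ.
have h1 : rho1 (Jc w) = sW w.1 w.2 - rho1 w by rewrite -rho1W; ring.
have h2 : rho2 k (Jc w) = sW w.1 w.2 - rho2 k w by rewrite -rho2W; ring.
rewrite h1 h2.
have ad0 : 0 < sa p.1 * sd (S1p p) (S2p p) by rewrite -rho1_sa -rho2_sd.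
apply: sqrt_levi_alg => //; first by rewrite sqrtr_gt0.
exact: (core_ineq _ _ _ _ _ (hSp p)).
Qed.

Lemma sW_pos w : cn_nonzero w -> 0 < sW w.1 w.2.
Proof.
case=> i Hi; rewrite lt_def sW_ge0 andbT.
apply/eqP => /sumsq_eq0 /(_ i) [h1 h2].
by case: Hi; rewrite ?h1 ?h2 eqxx.
Qed.

Definition Pv p : R := sA (S1p p) + (sa p.1 - sd (S1p p) (S2p p)) ^+ 2
   + sxS2 p.1 (S2p p) ^+ 2.

Lemma pf_eq {f g : Cn R n -> R} : polyfun f -> (forall p, g p = f p) -> polyfun g.
Proof. by move=> H E; have -> : g = f by apply/funext => p; rewrite E. Qed.

Lemma pf_sum {F : 'I_n -> Cn R n -> R} : (forall i, polyfun (F i)) ->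
  polyfun (fun p => \sum_(i < n) F i p).
Proof.
move=> HF.
suff : forall r : seq 'I_n, polyfun (fun p => \sum_(i <- r) F i p) by apply.
elim=> [|i r IH].
  by apply: (pf_eq (polyfun_cst n (0:R))) => p; rewrite big_nil.
apply: (pf_eq (polyfun_add (HF i) IH)) => p; by rewrite big_cons.
Qed.

Lemma pf_sq {f : Cn R n -> R} : polyfun f -> polyfun (fun p => f p ^+ 2).
Proof. by move=> H; apply: (pf_eq (polyfun_mul H H)) => p; rewrite expr2. Qed.

Lemma pf_sub {f g : Cn R n -> R} : polyfun f -> polyfun g -> polyfun (fun p => f p - g p).
Proof.
move=> Hf Hg; apply: (pf_eq (polyfun_add Hf (polyfun_mul (polyfun_cst n (-1:R)) Hg))) => p.
by rewrite mulN1r.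
Qed.

Lemma pf_S1 i : polyfun (fun p => S1p p i).
Proof.
rewrite /S1p; case: (i < k)%N; first exact: polyfun_x.
exact: polyfun_cst.
Qed.

Lemma pf_S2 i : polyfun (fun p => S2p p i).
Proof.
rewrite /S2p; case: (i < k)%N; first exact: polyfun_cst.
apply: (pf_eq (polyfun_mul (polyfun_cst n (-1:R)) (polyfun_y R i))) => p.
by rewrite mulN1r.
Qed.

Lemma pf_Pv : polyfun Pv.
Proof.
have h1 : polyfun (fun p : Cn R n => \sum_(i < n) S1p p i ^+ 2).
  by apply: pf_sum => i; exact: pf_sq (pf_S1 i).
have h2 : polyfun (fun p : Cn R n => (\sum_(i < n) p.1 i ^+ 2
     - \sum_(i < n) (S1p p i ^+ 2 + S2p p i ^+ 2)) ^+ 2).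
  apply: pf_sq; apply: pf_sub.
    by apply: pf_sum => i; apply: pf_sq; exact: polyfun_x.
  apply: pf_sum => i.
  exact: (pf_eq (polyfun_add (pf_sq (pf_S1 i)) (pf_sq (pf_S2 i)))).
have h3 : polyfun (fun p : Cn R n => (\sum_(i < n) p.1 i * S2p p i) ^+ 2).
  by apply: pf_sq; apply: pf_sum => i; exact: (polyfun_mul (polyfun_x R i) (pf_S2 i)).
by apply: (pf_eq (polyfun_add (polyfun_add h1 h2) h3)).
Qed.

End Geo.

Arguments S1p {R n}.
Arguments S2p {R n}.
Arguments Pv {R n}.
Arguments hSp {R n}.
Arguments pf_Pv {R n}.
Arguments levi_sqrt_ge0 {R n}.
Arguments levi_prod {R n}.
Arguments sW_pos {R n}.
Arguments rho2_sd {R n}.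
Arguments rho1_sa {R n}.

Theorem proposition2p5 (R : realType) (n k : nat) (hkn : (k <= n)%N) :
  (* sqrt(rho1 rho2) is weakly psh wherever it is C^2, i.e. off L1 u L2 *)
  (forall p : Cn R n, rho1 p * rho2 k p != 0 ->
     weakly_psh_at (fun q => Num.sqrt (rho1 q * rho2 k q)) p) /\
  (* rho1 rho2 is weakly psh everywhere *)
  (forall p : Cn R n, weakly_psh_at (fun q => rho1 q * rho2 k q) p) /\
  (* a variety V with V n (L1 u L2) = L1 n L2, strict psh outside V *)
  (exists V : set (Cn R n),
     is_variety V /\
     V `&` (@L1 R n `|` @L2 R n k) = @L1 R n `&` @L2 R n k /\
     (forall p, ~ V p -> strictly_psh_at (fun q => rho1 q * rho2 k q) p)).
Proof.
split.
  move=> p hp w; apply: levi_sqrt_ge0.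
  rewrite lt_def hp /=; apply: mulr_ge0; first exact: sa_ge0.
  by rewrite rho2_sd; exact: sd_ge0.
split.
  move=> p w; rewrite levi_prod; apply: divr_ge0 => //.
  exact: (core_P _ _ _ _ _ (hSp k p)).
exists [set p | Pv k p = 0].
split; first by exists (Pv k); split; [exact: pf_Pv|].
split.
  apply/seteqP; split => q /=.
    move=> [P0 H].
    have hA := sA_ge0 (S1p k q).
    have hs1 := sqr_ge0 (sa q.1 - sd (S1p k q) (S2p k q)).
    have hs2 := sqr_ge0 (sxS2 q.1 (S2p k q)).
    have E : (sa q.1 - sd (S1p k q) (S2p k q)) ^+ 2 = 0 by rewrite /Pv in P0; lra.
    move/eqP: E; rewrite sqrf_eq0 subr_eq0 => /eqP E.
    move: H; rewrite /L1 /L2 /= rho2_sd rho1_sa E.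
    by case=> ->.
  move=> [h1 h2]; rewrite /L1 /L2 /= in h1 h2; split; last by left.
  have [_ [_ [hx hA]]] := a0 q.1 (S1p k q) (S2p k q) q.1 q.2 (hSp k q) h1.
  move: h1 h2; rewrite /Pv hx hA rho2_sd rho1_sa => -> ->.
  by rewrite subrr expr0n /= !addr0.
move=> q nV w wnz; rewrite levi_prod.
have Wp := sW_pos w wnz.
have P0 := core_P _ _ _ w.1 w.2 (hSp k q).
apply: divr_gt0 => //; rewrite lt_def P0 andbT.
apply/eqP => Pz; apply: nV.
have [hA [he hx]] := core_strict _ _ _ _ _ (hSp k q) Wp Pz.
by rewrite /= /Pv hA he hx subrr expr0n /= !addr0.
Qed.
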